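(* Let $p$ be a prime, $n\ge2$, let $f,g:\mathbb{F}_p^n\to\mathbb{F}_p$ and let $\mathcal{E}=\{e_1,\dots,e_n\}$ be a basis of $\mathbb{F}_p^n$ over $\mathbb{F}_p$ with coordinates $x_1,\dots,x_n$ relative to $\mathcal{E}$. Suppose that for some $i\neq j$ in $\{1,\dots,n\}$, $\Delta_{e_i}f(x)=\Delta_{e_j}g(x)$ for all $x$. Then \[\deg_{x_j}(\Delta_{e_i}f)=\deg_{x_j}(\Delta_{e_j}g)<p-1\quad\text{and}\quad \deg_{x_i}(\Delta_{e_j}g)=\deg_{x_i}(\Delta_{e_i}f)<p-1.\]
   Context: $\Delta_aF(x)=F(x+a)-F(x)$. Writing $x=\sum_k x_ke_k$, every function $h:\mathbb{F}_p^n\to\mathbb{F}_p$ has a unique algebraic normal form $h=\sum_{(i_1,\dots,i_n)\in\{0,\dots,p-1\}^n}h_{(i_1,\dots,i_n)}\prod_k x_k^{i_k}$ with coefficients in $\mathbb{F}_p$, and $\deg_{x_k}(h)=\max\{i_k \mid h_{(i_1,\dots,i_n)}\ne0\}$. *)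

(* Defs.v *)
From mathcomp Require Import all_boot all_order all_algebra.
Set Implicit Arguments. Unset Strict Implicit. Unset Printing Implicit Defensive.
Import GRing.Theory.
Local Open Scope ring_scope.

Definition Delta (p n : nat) (a : 'rV['F_p]_n) (F : 'rV['F_p]_n -> 'F_p)
  : 'rV['F_p]_n -> 'F_p := fun x => F (x + a) - F x.

Definition expvec (p n : nat) := {ffun 'I_n -> 'I_p}.

(* The basis E = {e_1,...,e_n} is given as the rows of an invertible matrix E
   (e_k = row k E); the point with coordinates c is x = \sum_k c_k e_k = c *m E. *)

Definition is_anf (p n : nat) (E : 'M['F_p]_n) (h : 'rV['F_p]_n -> 'F_p)
  (a : {ffun expvec p n -> 'F_p}) : bool :=
  [forall c : 'rV['F_p]_n,
     h (c *m E) == \sum_(m : expvec p n) a m * \prod_(k < n) c 0 k ^+ (m k : nat)].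

(* The (unique) algebraic normal form of h (all-zero if none were found). *)
Definition anf (p n : nat) (E : 'M['F_p]_n) (h : 'rV['F_p]_n -> 'F_p)
  : {ffun expvec p n -> 'F_p} :=
  odflt [ffun=> 0] [pick a | is_anf E h a].

Definition degx (p n : nat) (E : 'M['F_p]_n) (k : 'I_n) (h : 'rV['F_p]_n -> 'F_p)
  : nat :=
  \max_(m : expvec p n | anf E h m != 0) (m k : nat).

(* Main.v *)
Require Import Defs.
From mathcomp Require Import all_boot all_order all_algebra all_fingroup all_solvable all_field.
From mathcomp Require Import zify.
Set Implicit Arguments. Unset Strict Implicit. Unset Printing Implicit Defensive.
Import GRing.Theory.
Local Open Scope ring_scope.

Section S.
Variable p : nat.
Hypothesis hp : prime p.
Local Notation K := 'F_p.

Lemma fermat1 (t : K) : t != 0 -> t ^+ p.-1 = 1.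
Proof.
move=> nz; have : t ^+ p = t by have := expf_card t; rewrite [#|_|]card_Fp.
have E : t ^+ p.-1.+1 = t * t ^+ p.-1 := exprS _ _.
rewrite (prednK (prime_gt0 hp)) in E; rewrite E.
by move=> H; apply: (mulfI nz); rewrite mulr1.
Qed.

Lemma pK0 : (p%:R : K) = 0.
Proof. by apply/eqP; have := pchar_Fp hp => /andP[]. Qed.

Lemma sum_pow0 : \sum_(t : K) t ^+ 0 = 0.
Proof. by rewrite (eq_bigr (fun _ => 1)) // sumr_const [#|_|]card_Fp // pK0. Qed.

Lemma sum_pow_dvd e : (0 < e)%N -> (p.-1 %| e)%N -> \sum_(t : K) t ^+ e = -1.
Proof.
move=> e0 /dvdnP[k ek]; rewrite ek.
rewrite (eq_bigr (fun t => 1 - (t == 0)%:R)); last first.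
  move=> t _; have [->|nz] := eqVneq t 0.
    by rewrite expr0n subrr; have -> : (k * p.-1 == 0)%N = false by lia.
  by rewrite mulnC exprM fermat1 // expr1n subr0.
rewrite sumrB sumr_const [#|_|]card_Fp // pK0 sub0r (bigD1 0) //= big1 ?addr0 //.
by move=> t /negPf ->.
Qed.

Lemma sum_pow_ndvd e : ~~ (p.-1 %| e)%N -> \sum_(t : K) t ^+ e = 0.
Proof.
move=> nd.
have p1 : (0 < p.-1)%N by have := prime_gt1 hp; lia.
have : has p.-1.-primitive_root (enum (predC1 (0:K))).
  apply: has_prim_root => //; last by rewrite -cardE cardC1 [#|_|]card_Fp.
  - apply/allP => x; rewrite mem_enum /= => nz; rewrite unity_rootE fermat1 //.
  - exact: enum_uniq.
case/hasP => z; rewrite mem_enum /= => nz prim.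
have ze : z ^+ e != 1 by rewrite -(prim_order_dvd prim).
have HS : \sum_(t : K) t ^+ e = z ^+ e * \sum_(t : K) t ^+ e.
  rewrite mulr_sumr {1}(reindex_inj (mulfI nz)) /=; apply: eq_bigr => t _; exact: exprMn.
move/eqP: HS; rewrite -subr_eq0 -{1}[\sum_(t : K) t ^+ e]mul1r -mulrBl mulf_eq0 subr_eq0 eq_sym (negbTE ze) /=.
by move/eqP.
Qed.

Lemma sum_pow e : \sum_(t : K) t ^+ e = if e == 0%N then 0 else if (p.-1 %| e)%N then -1 else 0.
Proof.
case: eqP => [->|/eqP e0]; first exact: sum_pow0.
case: ifP => d; first by apply: sum_pow_dvd => //; lia.
by apply: sum_pow_ndvd; rewrite d.
Qed.

Definition W (m : nat) (t : K) := if m == 0%N then 1 - t ^+ p.-1 else t ^+ (p.-1 - m).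

Lemma orth m m' : (m < p)%N -> (m' < p)%N ->
  \sum_(t : K) W m' t * t ^+ m = if m == m' then (if m' == 0%N then 1 else -1) else 0.
Proof.
move=> mp m'p; rewrite /W.
have p1 : (0 < p.-1)%N by have := prime_gt1 hp; lia.
case: eqP => [m'0|/eqP m'0].
  under eq_bigr do rewrite mulrBl mul1r -exprD.
  rewrite sumrB !sum_pow m'0.
  case: eqP => [->|/eqP m0] /=.
    rewrite addn0 dvdnn; have -> : (p.-1 == 0%N) = false by lia.
    by rewrite sub0r opprK.
  have -> : (p.-1 + m == 0)%N = false by lia.
  rewrite (dvdn_addr _ (dvdnn _)).
  by case: ifP => _; rewrite subrr.
under eq_bigr do rewrite -exprD.
rewrite sum_pow.
case: (eqVneq m m') => [->|mm].
  have -> : (p.-1 - m' + m' = p.-1)%N by lia.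
  by rewrite dvdnn; have -> : (p.-1 == 0%N) = false by lia.
case: eqP => [_|/eqP e0] //.
case: ifP => // /dvdnP[k hk].
exfalso; move: hk; case: k => [|[|k]]; rewrite ?mulSn ?mul0n ?addn0 => hk; lia.
Qed.


Lemma prodsum n (G : 'I_n -> K -> K) :
  \sum_(c : 'rV[K]_n) \prod_(l < n) G l (c 0 l) = \prod_(l < n) \sum_(t : K) G l t.
Proof.
rewrite bigA_distr_bigA /=.
rewrite (reindex (fun f : {ffun 'I_n -> K} => \row_l f l)) /=.
  by apply: eq_bigr => f _; apply: eq_bigr => l _; rewrite mxE.
exists (fun c : 'rV[K]_n => [ffun l => c 0 l]) => [f _|c _].
  by apply/ffunP => l; rewrite ffunE mxE.
by apply/rowP => l; rewrite mxE ffunE.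
Qed.

Lemma anf_zero n (E : 'M[K]_n) (k : 'I_n) h a (m' : expvec p n) :
  is_anf E (Delta (row k E) h) a -> (m' k : nat) = p.-1 -> a m' = 0.
Proof.
move=> /forallP Ha mk.
have HA c := eqP (Ha c).
have p1 : (1 < p)%N := prime_gt1 hp.
pose Wt (c : 'rV[K]_n) := \prod_(l < n) W (m' l) (c 0 l).
have T0 : \sum_c Wt c * Delta (row k E) h (c *m E) = 0.
  rewrite /Delta. under eq_bigr do rewrite mulrBr.
  rewrite sumrB; apply/eqP; rewrite subr_eq0; apply/eqP.
  rewrite [RHS](reindex_inj (addIr (delta_mx 0 k))) /=.
  apply: eq_bigr => c _; rewrite rowE mulmxDl; congr (_ * _).
  rewrite /Wt; apply: eq_bigr => l _; rewrite !mxE /W.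
  have [->|nlk] := eqVneq l k.
    rewrite mk; have -> : (p.-1 == 0)%N = false by lia.
    by rewrite subnn !expr0.
  by rewrite andbF addr0.
have inner m : \sum_c Wt c * (a m * \prod_l c 0 l ^+ m l) =
    a m * \prod_l (if (m l : nat) == m' l then (if (m' l : nat) == 0%N then 1 else -1) else 0).
  rewrite (eq_bigr (fun c => a m * (Wt c * \prod_l c 0 l ^+ m l))); last by move=> c _; rewrite mulrCA.
  rewrite -mulr_sumr; congr (_ * _).
  rewrite (eq_bigr (fun c : 'rV[K]_n => \prod_l (W (m' l) (c 0 l) * c 0 l ^+ m l))); last by move=> c _; rewrite big_split.
  rewrite (prodsum (fun l t => W (m' l) t * t ^+ m l)); apply: eq_bigr => l _; exact: orth.
have T1 : \sum_c Wt c * Delta (row k E) h (c *m E) =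
    a m' * \prod_(l < n) (if (m' l : nat) == 0%N then 1 else -1).
  under eq_bigr do rewrite HA mulr_sumr.
  rewrite exchange_big /=.
  under eq_bigr do rewrite inner.
  rewrite (bigD1 m') //= [X in _ + X]big1 ?addr0.
    by congr (_ * _); apply: eq_bigr => l _; rewrite eqxx.
  move=> m nm.
  have [l Hl] : exists l, m l != m' l.
    case: (pickP (fun l => m l != m' l)) => [l Hl|H]; first by exists l.
    move: nm; have -> : m = m' by apply/ffunP => l; apply/eqP; move: (H l) => /negbFE.
    by rewrite eqxx.
  rewrite (bigD1 l) //=.
  have -> : ((m l : nat) == m' l) = false by apply/negbTE.
  by rewrite mul0r mulr0.
move: T0; rewrite T1 => /eqP; rewrite mulf_eq0 => /orP[/eqP //|].
rewrite prodf_seq_eq0 => /hasP[l _ /=].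
by case: ifP => _; rewrite ?oner_eq0 ?oppr_eq0 ?oner_eq0.
Qed.

Lemma degx_lt n (E : 'M[K]_n) k h : (degx E k (Delta (row k E) h) < p.-1)%N.
Proof.
have p1 : (1 < p)%N := prime_gt1 hp.
rewrite /degx; apply: (@leq_ltn_trans p.-2); last lia.
apply/bigmax_leqP => m; rewrite /anf.
case: pickP => [a Ha|_] /=; last by rewrite ffunE eqxx.
move=> am.
have : (m k : nat) != p.-1.
  by apply: contra am => /eqP mk; apply/eqP; exact: anf_zero Ha mk.
have := ltn_ord (m k); move: (nat_of_ord (m k)) => x h1 /eqP h2; lia.
Qed.

Lemma degx_ext n (E : 'M[K]_n) k (h1 h2 : 'rV[K]_n -> K) :
  (forall x, h1 x = h2 x) -> degx E k h1 = degx E k h2.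
Proof.
move=> H; rewrite /degx /anf (@eq_pick _ _ (fun a => is_anf E h2 a)) //.
by move=> a; rewrite /is_anf; apply: eq_forallb => c; rewrite H.
Qed.

End S.

Theorem lemma3 (p n : nat) (hp : prime p) (hn : (2 <= n)%N)
  (f g : 'rV['F_p]_n -> 'F_p) (E : 'M['F_p]_n) (hE : E \in unitmx)
  (i j : 'I_n) (hij : i != j)
  (hfg : forall x : 'rV['F_p]_n, Delta (row i E) f x = Delta (row j E) g x) :
  [/\ degx E j (Delta (row i E) f) = degx E j (Delta (row j E) g),
      (degx E j (Delta (row j E) g) < p.-1)%N,
      degx E i (Delta (row j E) g) = degx E i (Delta (row i E) f)
    & (degx E i (Delta (row i E) f) < p.-1)%N].
Proof.
split; first exact: degx_ext.
- exact: degx_lt.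
- by apply: degx_ext => x; rewrite hfg.
- exact: degx_lt.
Qed.
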